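(* Let $N,k$ be positive integers and $\lambda$ a partition with $l(\lambda)\le N$. Then: (1) $c'_\lambda(q,t)$ is nonzero at $q^kt^N=1$. (2) $c_\lambda(q,t)$ is zero at $q^kt^N=1$ if and only if $l(\lambda^t)>k$ and $l(\overline{\lambda}^t)\le k$. Moreover, in that case exactly one of the factors $1-q^{a(s)}t^{l(s)+1}$, $s\in\lambda$, becomes zero at $q^kt^N=1$ (the order of vanishing is $1$).
   Context: Partitions $\lambda=(\lambda_1\ge\lambda_2\ge\cdots)$ are identified with Young diagrams $\{(i,j): i\ge1,\ 1\le j\le\lambda_i\}$; $\lambda^t$ is the transpose partition, $l(\lambda)$ the number of nonzero parts (so $l(\lambda^t)=\lambda_1$), $|\lambda|=\sum_i\lambda_i$. For a box $s=(i,j)\in\lambda$: arm $a(s)=\lambda_i-j$, leg $l(s)=\lambda^t_j-i$. Set $c_\lambda(q,t)=\prod_{s\in\lambda}(1-q^{a(s)}t^{l(s)+1})$ and $c'_\lambda(q,t)=\prod_{s\in\lambda}(1-q^{a(s)+1}t^{l(s)})$. For a partition $\lambda$ with $l(\lambda)\le N$, $\overline{\lambda}$ denotes the partition $(\lambda_1-\lambda_N,\lambda_2-\lambda_N,\dots,\lambda_{N-1}-\lambda_N)$ obtained by removing all columns of height $N$ (so $l(\overline\lambda)<N$). Specialization at $q^kt^N=1$: let $m=\gcd(k,N)$, fix a primitive $m$-th root of unity $\omega$ and $\omega_1\in\mathbb C$ with $\omega_1^{N/m}=\omega$. Let $v$ be an indeterminate and consider the ring homomorphism $\mathbb Z[q^{\pm1},t^{\pm1}]\to\mathbb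 C(v)$, $q\mapsto v^N$, $t\mapsto v^{-k}\omega_1$. An element is said to be zero (resp. nonzero) at $q^kt^N=1$ if its image under this homomorphism is zero (resp. nonzero). *)

(* Defs.v *)
From HB Require Import structures.
From mathcomp Require Import all_boot all_order all_algebra all_field.
Set Implicit Arguments. Unset Strict Implicit. Unset Printing Implicit Defensive.
Import Order.TTheory GRing.Theory Num.Theory.

Definition is_partition (s : seq nat) : bool :=
  sorted geq s && all (fun x => 0 < x) s.

Definition plen (s : seq nat) : nat := size s.

(* lambda_i, 1-indexed (0 if i > l(lambda)) *)
Definition part (s : seq nat) (i : nat) : nat := nth 0 s i.-1.

Definition conj_part (s : seq nat) (j : nat) : nat := count (fun x => j <= x) s.

Definition transp (s : seq nat) : seq nat :=
  [seq conj_part s j | j <- iota 1 (head 0 s)].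

Definition boxes (s : seq nat) : seq (nat * nat) :=
  [seq (i, j) | i <- iota 1 (size s), j <- iota 1 (part s i)].

Definition arm (s : seq nat) (b : nat * nat) : nat := part s b.1 - b.2.
Definition leg (s : seq nat) (b : nat * nat) : nat := conj_part s b.2 - b.1.

Definition c_lam (R : comNzRingType) (q t : R) (s : seq nat) : R :=
  (\prod_(b <- boxes s) (1 - q ^+ arm s b * t ^+ (leg s b).+1))%R.
Definition c'_lam (R : comNzRingType) (q t : R) (s : seq nat) : R :=
  (\prod_(b <- boxes s) (1 - q ^+ (arm s b).+1 * t ^+ leg s b))%R.

Definition pbar (N : nat) (s : seq nat) : seq nat :=
  [seq x <- [seq part s i - part s N | i <- iota 1 N.-1] | 0 < x].

(* The target field C(v) of the specialization, with C = algC. *)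
Definition Cv := {fraction {poly algC}}.
Definition vv : Cv := tofrac ('X : {poly algC}).
Definition cst (c : algC) : Cv := tofrac (c%:P).
(* images of q and t under q |-> v^N, t |-> v^{-k} omega_1 *)
Definition q_img (N : nat) : Cv := (vv ^+ N)%R.
Definition t_img (k : nat) (w1 : algC) : Cv := ((vv ^+ k)^-1 * cst w1)%R.

(* Main.v *)
Require Import Defs.
From HB Require Import structures.
From mathcomp Require Import all_boot all_order all_algebra all_field.
From mathcomp Require Import zify.
Set Implicit Arguments. Unset Strict Implicit.
Import GRing.Theory.

Section Alg.
Local Open Scope ring_scope.

Lemma polyXc (n m : nat) (c : algC) : c != 0 ->
  ((c *: ('X^n : {poly algC}) == 'X^m) = (n == m)%N && (c == 1)).
Proof.
move=> c0; apply/eqP/andP.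
- move=> E.
  have h1 := congr1 (fun p : {poly algC} => p`_n) E.
  rewrite /= coefZ !coefXn eqxx mulr1 in h1.
  have hn : (n == m)%N by move: h1; case: eqP => // _ h; rewrite h eqxx in c0.
  split=> //; by rewrite h1 hn.
- by case=> /eqP -> /eqP ->; rewrite scale1r.
Qed.

Lemma vv_neq0 : vv != 0.
Proof. by rewrite /vv tofrac_eq0 polyX_eq0. Qed.

Lemma factor0 (N k a b : nat) (w1 : algC) : w1 != 0 ->
  (1 - q_img N ^+ a * t_img k w1 ^+ b == 0) = (N*a == k*b)%N && (w1 ^+ b == 1).
Proof.
move=> w0.
have E : q_img N ^+ a * t_img k w1 ^+ b =
   tofrac ('X^(N*a) * (w1 ^+ b)%:P) / tofrac ('X^(k*b)).
  rewrite /q_img /t_img /vv /cst exprMn -!exprM exprVn tofracM !tofracXn.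
  idtac.
  rewrite rmorphXn tofracXn -exprM. by rewrite mulrA mulrAC.
rewrite E subr_eq0 eq_sym.
have nz : tofrac ('X^(k*b) : {poly algC}) != 0 by rewrite tofrac_eq0 monic_neq0 ?monicXn.
have H : forall x y : Cv, y != 0 -> (x / y == 1) = (x == y).
  by move=> x y yn; apply/eqP/eqP=> [h|->]; [by rewrite -(divfK yn x) h mul1r | by rewrite divff].
rewrite (H _ _ nz) tofrac_eq mulrC mul_polyC polyXc ?expf_neq0 //.
Qed.
End Alg.

Lemma nt_dvd (N k a b : nat) (w w1 : algC) : 0 < N -> 0 < k ->
  primitive_root_of_unity (gcdn k N) w -> (w1 ^+ (N %/ gcdn k N) = w)%R ->
  N * a = k * b -> (w1 ^+ b == 1)%R -> N %| b.
Proof.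
move=> N0 k0 pw ew Eab wb.
set m := gcdn k N in pw ew.
have m0 : 0 < m by rewrite /m gcdn_gt0 k0.
have eN : N = N %/ m * m by rewrite divnK // /m dvdn_gcdr.
have ek : k = k %/ m * m by rewrite divnK // /m dvdn_gcdl.
set N' := N %/ m in eN ew *; set k' := k %/ m in ek.
have cop : coprime N' k'.
  rewrite /coprime gcdnC; apply/eqP.
  have : gcdn k' N' * m = 1 * m by rewrite muln_gcdl -ek -eN mul1n.
  by move/eqP; rewrite eqn_pmul2r // => /eqP.
have E' : N' * a = k' * b.
  apply/eqP; rewrite -(eqn_pmul2r m0) mulnAC -eN mulnAC -ek; exact/eqP.
have : N' %| k' * b by rewrite -E' dvdn_mulr.

rewrite (Gauss_dvdr _ cop).
case/dvdnP=> j ej.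
move: wb; rewrite ej mulnC exprM ew -(prim_order_dvd pw) => /dvdnP [i ->].
by rewrite {1}eN mulnCA dvdn_mull.
Qed.

Lemma nt_one (N k : nat) (w w1 : algC) : 0 < N -> 0 < k ->
  primitive_root_of_unity (gcdn k N) w -> (w1 ^+ (N %/ gcdn k N) = w)%R ->
  (w1 ^+ N == 1)%R.
Proof.
move=> N0 k0 pw ew.
have eN : N = N %/ gcdn k N * gcdn k N by rewrite divnK // dvdn_gcdr.
by rewrite eN exprM ew prim_expr_order.
Qed.
Section Comb.
Variable s : seq nat.
Hypothesis ps : is_partition s.

Lemma sortedS : sorted geq s. Proof. by case/andP: ps. Qed.
Lemma posS : all (fun x => 0 < x) s. Proof. by case/andP: ps. Qed.

Lemma nth_mono i i' : i <= i' -> nth 0 s i' <= nth 0 s i.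
Proof.
move=> ii'.
case: (ltnP i' (size s)) => hi'; last by rewrite nth_default.
have tr : transitive geq by move=> x y z /= h1 h2; exact: leq_trans h2 h1.
have rf : reflexive geq by move=> x /=.
apply: (sorted_leq_nth tr rf 0 sortedS) => //; rewrite inE //; exact: leq_ltn_trans hi'.
Qed.

Lemma mem_boxes i j : (i, j) \in boxes s ->
  [/\ 1 <= i, i <= size s, 1 <= j & j <= part s i].
Proof.
case/allpairsPdep=> x [y [hx hy [-> ->]]].
move: hx hy; rewrite !mem_iota => hx hy; split; lia.
Qed.

Lemma boxes_mem i j : 1 <= i <= size s -> 1 <= j <= part s i -> (i, j) \in boxes s.
Proof.
move=> hi hj; apply/allpairsPdep; exists i, j; split=> //; rewrite mem_iota; lia.
Qed.

Lemma conj_ge i j : (i, j) \in boxes s -> i <= conj_part s j.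
Proof.
case/mem_boxes=> i1 isz j1 ji.
rewrite /conj_part -(cat_take_drop i s) count_cat.
have : count (fun x => j <= x) (take i s) = i.

  move: (size_takel isz) => st.
  apply/eqP; rewrite -{2}st -all_count; apply/(all_nthP 0) => idx hidx.
  rewrite nth_take; last by rewrite st in hidx.
  rewrite st in hidx.
  apply: (leq_trans ji); rewrite /part; apply: nth_mono; lia.
move=> ->; exact: leq_addr.
Qed.

Lemma conj_le j : conj_part s j <= size s.
Proof. exact: count_size. Qed.

Lemma conj_eqN N j : 0 < N -> size s <= N -> 1 <= j ->
  (conj_part s j == N) = (j <= part s N).
Proof.
move=> N0 sN j1; rewrite /conj_part /part.
apply/eqP/idP.
- move=> cN.
  have eS : size s = N by have := count_size (fun x => j <= x) s; lia.
  have : all (fun x => j <= x) s by rewrite all_count cN eS.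
  move/allP; apply; apply: mem_nth; by rewrite eS ltn_predL.
- move=> h.
  have hN : N.-1 < size s.
    rewrite ltnNge; apply/negP=> h'; move: h; rewrite nth_default //; lia.
  have eS : size s = N by lia.
  rewrite -eS; apply/eqP; rewrite -all_count; apply/(all_nthP 0)=> idx hidx.
  apply: (leq_trans h); apply: nth_mono; lia.
Qed.

Lemma part1_ge i : part s i <= part s 1.
Proof. rewrite /part; apply: nth_mono; lia. Qed.

Lemma plen_transp : plen (transp s) = part s 1.
Proof. by rewrite /plen /transp size_map size_iota /part; case: s. Qed.

Lemma head_pbar N : head 0 (pbar N s) = part s 1 - part s N.
Proof.
rewrite /pbar; case: N => [|[|n]] /=.
- by rewrite /part /= subnn.
- by rewrite subnn.
  case: ifP => // /negbT; rewrite lt0n negbK => /eqP h0; rewrite h0.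
  rewrite (_ : [seq x <- _ | _] = [::]) //.
  rewrite (@eq_in_filter _ _ pred0); first by rewrite filter_pred0.
  move=> x /mapP [i hi ->] /=; have := part1_ge i; lia.
Qed.

End Comb.

Theorem lemma2p3 (N k : nat) (s : seq nat) (w w1 : algC) :
  0 < N -> 0 < k -> is_partition s -> plen s <= N ->
  primitive_root_of_unity (gcdn k N) w -> (w1 ^+ (N %/ gcdn k N) = w)%R ->
  (* (1) *)
  (c'_lam (q_img N) (t_img k w1) s != 0)%R /\
  (* (2) *)
  ((c_lam (q_img N) (t_img k w1) s == 0)%R =
     (k < plen (transp s)) && (plen (transp (pbar N s)) <= k)) /\
  ((c_lam (q_img N) (t_img k w1) s == 0)%R ->
     count (fun b => (1 - q_img N ^+ arm s b * t_img k w1 ^+ (leg s b).+1 == 0)%R)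
       (boxes s) = 1).
Proof.
move=> N0 k0 ps sN pw ew.
have w10 : (w1 != 0)%R.
  apply/eqP => h; have := nt_one N0 k0 pw ew.
  rewrite h expr0n (_ : (N == 0%N) = false); last by lia.
  by rewrite /= eq_sym oner_eq0.
rewrite /plen in sN.
set C := (k < part s 1) && (part s 1 - k <= part s N).
set x := (1, part s 1 - k).
have key : {in boxes s, forall b,
   (1 - q_img N ^+ arm s b * t_img k w1 ^+ (leg s b).+1 == 0)%R = (b == x) && C}.
  move=> [i j] hb.
  have [i1 isz j1 ji] := mem_boxes ps hb.
  have hc := conj_ge ps hb.
  have hcl := conj_le s j.
  rewrite factor0 // /arm /leg /=.
  apply/idP/idP.
  - case/andP=> /eqP E W.
    have D := nt_dvd N0 k0 pw ew E W.
    have le : (conj_part s j - i).+1 <= N by lia.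
    have ge := dvdn_leq (ltn0Sn _) D.
    have ei : i = 1 by lia.
    have ec : conj_part s j = N by lia.
    move: E; rewrite ec ei (_ : (N - 1).+1 = N); last by lia.
    rewrite mulnC => /eqP; rewrite eqn_pmul2r // => /eqP ea.
    have hjN : j <= part s N by rewrite -conj_eqN // ec.
    rewrite ei in ji.
    apply/andP; split; first by rewrite /x xpair_eqE; apply/andP; split; apply/eqP; lia.
    rewrite /C; apply/andP; split; lia.
  - case/andP=> /eqP [-> ->] /andP [h1 h2].
    have hcN : conj_part s (part s 1 - k) = N.
      by apply/eqP; rewrite conj_eqN //; lia.
    rewrite hcN (_ : (N - 1).+1 = N); last by lia.
    rewrite (_ : part s 1 - (part s 1 - k) = k); last by lia.
    by rewrite mulnC eqxx (nt_one N0 k0 pw ew).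
have xin : C -> x \in boxes s.
  case/andP=> h1 h2.
  have : 0 < size s.
    rewrite lt0n size_eq0; apply/eqP => s0; move: h1; rewrite /part s0 /=; lia.
  move=> hs; apply: (boxes_mem ps); lia.
have Hhas : (c_lam (q_img N) (t_img k w1) s == 0)%R = C.
  rewrite /c_lam prodf_seq_eq0.
  rewrite (@eq_in_has _ _ (fun b => (b == x) && C)); last by move=> b hb /=; exact: key.
  case hC: C.
  - by apply/hasP; exists x; [exact: xin | rewrite eqxx].
  - by apply/hasP => -[b _ /andP [_]].
have plt : forall t, plen (transp t) = head 0 t.
  by move=> t; rewrite /plen /transp size_map size_iota.
split; last split.
- rewrite /c'_lam prodf_seq_neq0; apply/allP => -[i j] hb /=.
  have [i1 isz j1 ji] := mem_boxes ps hb.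
  have hc := conj_ge ps hb.
  have hcl := conj_le s j.
  rewrite factor0 // /arm /leg /=.
  apply/negP => /andP [/eqP E W].
  have D := nt_dvd N0 k0 pw ew E W.
  move: E D; case E0: (conj_part s j - i) => [|l] E D.
  + by move: E; rewrite muln0 => /eqP; rewrite muln_eq0 /= -[N == 0]negbK -lt0n N0.
  + have := dvdn_leq (ltn0Sn _) D; lia.
- rewrite Hhas !plt head_pbar // (_ : head 0 s = part s 1); last by rewrite /part; case: (s).
  have := part1_ge ps N; rewrite /C => h.
  apply/andP/andP => -[h1 h2]; split; lia.
- move=> h; have hC : C by rewrite -Hhas.
  rewrite (eq_in_count key) (@eq_count _ _ (pred1 x)); last by move=> b /=; rewrite hC andbT.
  rewrite count_uniq_mem ?xin //.
  apply: allpairs_uniq_dep; first exact: iota_uniq.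
  + by move=> i _; exact: iota_uniq.
  + by move=> [a b] [c d] _ _ /= [-> ->].
Qed.
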